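(* Let $X$ be a finite set and $F_X:\mathbf{pow}(X)\to\mathbb{R}$ a filtration. Then for every $\sigma\in\mathbf{pow}(X)$, $$F_X(\sigma)=\min\{T_X(\sigma)\mid T_X \text{ is a tree filtration over }X\text{ with }T_X(\tau)\geq F_X(\tau)\text{ for all }\tau\in\mathbf{pow}(X)\},$$ and the minimum may be taken over a finite set of such tree filtrations.
   Context: $\mathbf{pow}(X)$ is the set of nonempty subsets of $X$. A filtration over $X$ is an order-preserving map $F_X:(\mathbf{pow}(X),\subset)\to(\mathbb{R},\leq)$. A symmetric ultranetwork over $X$ is a map $U_X:X\times X\to\mathbb{R}$ with $U_X(x,x')=U_X(x',x)$ and $U_X(x,x'')\leq\max\{U_X(x,x'),U_X(x',x'')\}$ for all $x,x',x''\in X$. A tree filtration is a filtration of the form $T_X(\sigma)=\max_{x,x'\in\sigma}U_X(x,x')$ for some symmetric ultranetwork $U_X$ (its Vietoris–Rips filtration). *)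

(* Defs.v *)
From mathcomp Require Import all_boot all_order all_algebra.
From mathcomp Require Export reals.
Set Implicit Arguments. Unset Strict Implicit. Unset Printing Implicit Defensive.
Import Order.TTheory GRing.Theory Num.Theory.
Local Open Scope ring_scope.

(* Functions on pow(X) are represented as functions {set X} -> R; only their
   values on nonempty subsets matter. *)

Definition filtration (R : realType) (X : finType) (F : {set X} -> R) : Prop :=
  forall s t : {set X}, s != set0 -> t != set0 -> s \subset t -> F s <= F t.

Definition sym_ultranetwork (R : realType) (X : finType) (U : X -> X -> R) : Prop :=
  (forall x x', U x x' = U x' x) /\
  (forall x x' x'', U x x'' <= Num.max (U x x') (U x' x'')).

(* T is the Vietoris-Rips filtration of U: T(s) = max_{x,x' in s} U(x,x')
   for every nonempty s (the maximum written out). *)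
Definition is_VR_of (R : realType) (X : finType) (U : X -> X -> R)
    (T : {set X} -> R) : Prop :=
  forall s : {set X}, s != set0 ->
    (exists x x', [/\ x \in s, x' \in s & T s = U x x']) /\
    (forall x x', x \in s -> x' \in s -> U x x' <= T s).

Definition tree_filtration (R : realType) (X : finType) (T : {set X} -> R) : Prop :=
  exists U : X -> X -> R, sym_ultranetwork U /\ is_VR_of U T.

Definition dominates (R : realType) (X : finType) (T F : {set X} -> R) : Prop :=
  forall t : {set X}, t != set0 -> F t <= T t.

(* Main.v *)
Require Import Defs.
From mathcomp Require Import all_boot all_order all_algebra.
From mathcomp Require Import reals.
Import Order.TTheory GRing.Theory Num.Theory.
Local Open Scope ring_scope.

Section Aux.
Variables (R : realType) (X : finType) (F : {set X} -> R).
Hypothesis hF : filtration F.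

Let M := F setT.
Definition Uf (s : {set X}) (x y : X) : R :=
  if (x \in s) && (y \in s) then F s else M.
Definition Tf (s : {set X}) (t : {set X}) : R :=
  if t \subset s then F s else M.

Lemma FleM s : s != set0 -> F s <= M.
Proof.
move=> hs; apply: hF => //; first by apply/set0Pn; case/set0Pn: hs => x _; exists x; exact: in_setT.
Qed.

Lemma good s : tree_filtration (Tf s) /\ dominates (Tf s) F.
Proof.
split.
  exists (Uf s); split.
    split; first by move=> x y; rewrite /Uf andbC.
    move=> x y z; rewrite /Uf.
    case: (boolP (x \in s)) => hx; case: (boolP (y \in s)) => hy;
      case: (boolP (z \in s)) => hz /=;
      rewrite ?le_max ?lexx ?orbT //.
    have hs : s != set0 by apply/set0Pn; exists x.
    by rewrite FleM.
  move=> t ht; case/set0Pn: (ht) => x0 hx0; split.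
    rewrite /Tf; case: (boolP (t \subset s)) => hts.
      by exists x0, x0; rewrite /Uf (subsetP hts _ hx0).
    case/subsetPn: hts => x hxt hxs.
    by exists x, x; rewrite /Uf (negbTE hxs).
  move=> x y hx hy; rewrite /Tf /Uf.
  case: (boolP (t \subset s)) => hts.
    by rewrite (subsetP hts _ hx) (subsetP hts _ hy).
  case: ifP => // /andP [hxs _].
  by apply: FleM; apply/set0Pn; exists x.
move=> t ht; rewrite /Tf; case: ifP => hts.
  apply: hF => //; apply/set0Pn; case/set0Pn: ht => x hx; exists x.
  exact: (subsetP hts).
apply: hF => //; first by apply/set0Pn; case/set0Pn: ht => x _; exists x; exact: in_setT.
Qed.

Lemma Tf_s s : Tf s s = F s.
Proof. by rewrite /Tf subxx. Qed.
End Aux.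

Theorem mainTheorem5 (R : realType) (X : finType) (F : {set X} -> R) :
  filtration F ->
  (* F(s) is the minimum of T(s) over tree filtrations T dominating F *)
  (forall s : {set X}, s != set0 ->
     (exists T : {set X} -> R, [/\ tree_filtration T, dominates T F & T s = F s]) /\
     (forall T : {set X} -> R, tree_filtration T -> dominates T F -> F s <= T s)) /\
  (* the minimum may be taken over a finite family of such tree filtrations *)
  (exists (n : nat) (Ts : 'I_n -> {set X} -> R),
     (forall i, tree_filtration (Ts i) /\ dominates (Ts i) F) /\
     (forall s : {set X}, s != set0 -> exists i, Ts i s = F s)).
Proof.
move=> hF; split.
  move=> s hs; split.
    exists (@Tf _ _ F s); have [h1 h2] := @good _ _ F hF s; split => //; exact: Tf_s.
  by move=> T _ hT; apply: hT.
exists #|{set X}|, (fun i => @Tf _ _ F (enum_val i)); split.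
  by move=> i; apply: (@good _ _ F hF).
move=> s _; exists (enum_rank s); by rewrite enum_rankK Tf_s.
Qed.
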